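(* The $\lambda j$-calculus enjoys PSN: every $\lambda$-term that is $\beta$-strongly normalizing is $\lambda j$-strongly normalizing.
   Context: $\lambda j$-terms are generated by $t,u::= x\mid \lambda x.t\mid t\,u\mid t[x/u]$ ($x$ ranging over variables); $\lambda x.t$ and $t[x/u]$ bind $x$ in $t$ (not in $u$), and terms are considered modulo $\alpha$-conversion. $\lambda$-terms are $\lambda j$-terms without jumps $[x/u]$. $\mathrm{fv}(t)$ is the set of free variables, $t\{x/u\}$ is capture-avoiding meta-level substitution, and $|t|_x$ is the number of free occurrences of $x$ in $t$. If $|t|_x=n\ge2$, $t_{[y]_x}$ denotes any term obtained from $t$ by replacing $k$ of the free occurrences of $x$ by a fresh variable $y$, for some $1\le k\le n-1$. ${\tt L}$ denotes a (possibly empty) list of jumps $[x_1/u_1]\dots[x_k/u_k]$. The rewriting rules, closed under all contexts, are: $({\tt dB})$ $(\lambda x.t){\tt L}\,u\to t[x/u]{\tt L}$ where no $x_i$ of ${\tt L}$ is free in $u$; $({\tt w})$ $t[x/u]\to t$ if $|t|_x=0$; $({\tt d})$ $t[x/u]\to t\{x/u\}$ if $|t|_x=1$; $({\tt c})$ $t[x/u]\to t_{[y]_x}[x/u][y/u]$ if $|t|_x\ge2$, $y$ fresh. $\to_{\lambda j}$ is the union of all four. $\beta$-reduction on $\lambda$-terms is the contextual closure of $(\lambda x.t)u\to_\beta t\{x/u\}$. A term is strongly normalizing for a relation if it has no infinite reduction sequence. *)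

(* Defs.v *)
From Stdlib Require Import Arith List.
Import ListNotations.

(* t ::= x | \x.t | t u | t[x/u].
   [Lam t] binds index 0 in t; [Sub t u] is t[x/u] and binds index 0 in t
   (not in u). *)
Inductive term : Type :=
| Var : nat -> term
| Lam : term -> term
| App : term -> term -> term
| Sub : term -> term -> term.

Fixpoint is_lambda (t : term) : Prop :=
  match t with
  | Var _ => True
  | Lam t => is_lambda t
  | App t u => is_lambda t /\ is_lambda u
  | Sub _ _ => False
  end.

Fixpoint shift (d c : nat) (t : term) : term :=
  match t with
  | Var n => if n <? c then Var n else Var (n + d)
  | Lam t => Lam (shift d (S c) t)
  | App t u => App (shift d c t) (shift d c u)
  | Sub t u => Sub (shift d (S c) t) (shift d c u)
  end.

(* subst c t u : capture-avoiding meta-level substitution of u (living in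
   the context outside the c local binders and the removed binder) for the
   index c in t; indices above c are decremented.  subst 0 t u = t{x/u}. *)
Fixpoint subst (c : nat) (t : term) (u : term) : term :=
  match t with
  | Var n => if n <? c then Var n
             else if n =? c then shift c 0 u
             else Var (pred n)
  | Lam t => Lam (subst (S c) t u)
  | App t1 t2 => App (subst c t1 u) (subst c t2 u)
  | Sub t1 t2 => Sub (subst (S c) t1 u) (subst c t2 u)
  end.

Fixpoint occ (c : nat) (t : term) : nat :=
  match t with
  | Var n => if n =? c then 1 else 0
  | Lam t => occ (S c) t
  | App t u => occ c t + occ c u
  | Sub t u => occ (S c) t + occ c u
  end.

(* t L where L = [u1; ...; uk] stands for t[x1/u1]...[xk/uk] *)
Definition apply_L (t : term) (L : list term) : term :=
  fold_left (fun acc u => Sub acc u) L t.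

(* dup c t s : s is t in which a fresh variable y (index c+1) has been
   inserted right after x (index c) and some (possibly none/all) free
   occurrences of x have been renamed to y.  Together with the side
   conditions |s|_x >= 1 and |s|_y >= 1 this is t_[y]_x. *)
Inductive dup : nat -> term -> term -> Prop :=
| dup_var_lt c n : n < c -> dup c (Var n) (Var n)
| dup_var_x c : dup c (Var c) (Var c)
| dup_var_y c : dup c (Var c) (Var (S c))
| dup_var_gt c n : c < n -> dup c (Var n) (Var (S n))
| dup_lam c t s : dup (S c) t s -> dup c (Lam t) (Lam s)
| dup_app c t1 t2 s1 s2 :
    dup c t1 s1 -> dup c t2 s2 -> dup c (App t1 t2) (App s1 s2)
| dup_sub c t1 t2 s1 s2 :
    dup (S c) t1 s1 -> dup c t2 s2 -> dup c (Sub t1 t2) (Sub s1 s2).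

Inductive lj_step : term -> term -> Prop :=
| lj_dB t L u :
    (* (\x.t)L u -> t[x/u]L ; the side condition on L is automatic with
       de Bruijn indices: u is lifted over the |L| binders of L *)
    lj_step (App (apply_L (Lam t) L) u)
            (apply_L (Sub t (shift (length L) 0 u)) L)
| lj_w t u : occ 0 t = 0 -> lj_step (Sub t u) (subst 0 t u)
| lj_d t u : occ 0 t = 1 -> lj_step (Sub t u) (subst 0 t u)
| lj_c t s u :
    2 <= occ 0 t -> dup 0 t s -> 1 <= occ 0 s -> 1 <= occ 1 s ->
    (* t_[y]_x [x/u][y/u] *)
    lj_step (Sub t u) (Sub (Sub s (shift 1 0 u)) u)
| lj_lam t t' : lj_step t t' -> lj_step (Lam t) (Lam t')
| lj_appl t t' u : lj_step t t' -> lj_step (App t u) (App t' u)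
| lj_appr t u u' : lj_step u u' -> lj_step (App t u) (App t u')
| lj_subl t t' u : lj_step t t' -> lj_step (Sub t u) (Sub t' u)
| lj_subr t u u' : lj_step u u' -> lj_step (Sub t u) (Sub t u').

Inductive beta_step : term -> term -> Prop :=
| beta_rule t u : beta_step (App (Lam t) u) (subst 0 t u)
| beta_lam t t' : beta_step t t' -> beta_step (Lam t) (Lam t')
| beta_appl t t' u : beta_step t t' -> beta_step (App t u) (App t' u)
| beta_appr t u u' : beta_step u u' -> beta_step (App t u) (App t u').

Definition SN (R : term -> term -> Prop) (t : term) : Prop :=
  ~ exists f : nat -> term, f 0 = t /\ forall n, R (f n) (f (S n)).

(* Main.v *)
Require Import Defs.
From Stdlib Require Import Arith List Lia Classical ClassicalEpsilon.
Import ListNotations.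

Ltac nat_cases :=
  repeat (match goal with
  | |- context [?a <? ?b] => destruct (Nat.ltb_spec a b)
  | |- context [?a =? ?b] => destruct (Nat.eqb_spec a b)
  end; cbn -[Nat.eqb Nat.ltb]); try reflexivity; try lia.

Ltac sm := cbn -[Nat.eqb Nat.ltb].

Lemma shift_0 : forall t c, shift 0 c t = t.
Proof. induction t; intros; simpl; try (f_equal; auto).
  nat_cases; f_equal; lia. Qed.

Lemma shift_shift_comm : forall u d k c e, e <= c ->
  shift d (c + k) (shift k e u) = shift k e (shift d c u).
Proof. induction u; intros; simpl.
  - nat_cases; f_equal; lia.
  - f_equal. apply (IHu d k (S c) (S e)). lia.
  - f_equal; auto.
  - f_equal. apply (IHu1 d k (S c) (S e)). lia. auto.
Qed.

Lemma shift_shift_merge : forall t a b c e, e <= c -> c <= e + b ->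
  shift a c (shift b e t) = shift (a + b) e t.
Proof. induction t; intros; simpl.
  - nat_cases; f_equal; lia.
  - f_equal. apply IHt; lia.
  - f_equal; auto.
  - f_equal. apply IHt1; lia. auto.
Qed.

Lemma subst_shift_cancel : forall t c d e u, e <= c -> c <= d + e ->
  subst c (shift (S d) e t) u = shift d e t.
Proof. induction t; intros; simpl.
  - nat_cases; f_equal; lia.
  - f_equal. apply IHt; lia.
  - f_equal; auto.
  - f_equal. apply IHt1; lia. auto.
Qed.

Lemma subst_shift_comm : forall t c k e u, e <= c ->
  subst (c + k) (shift k e t) u = shift k e (subst c t u).
Proof. induction t; intros; simpl.
  - nat_cases; try (f_equal; lia).
    subst. rewrite shift_shift_merge by lia. f_equal. lia.
  - f_equal. apply (IHt (S c) k (S e)). lia.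
  - f_equal; auto.
  - f_equal. apply (IHt1 (S c) k (S e)). lia. auto.
Qed.

Lemma shift_subst_comm : forall t d k m u, k <= m ->
  shift d m (subst k t u) = subst k (shift d (S m) t) (shift d (m - k) u).
Proof. induction t; intros; simpl.
  - nat_cases; try (f_equal; lia).
    subst. rewrite <- (shift_shift_comm u d k (m-k) 0) by lia. f_equal. lia.
  - f_equal. rewrite IHt by lia. reflexivity.
  - f_equal; auto.
  - f_equal; auto. rewrite IHt1 by lia. reflexivity.
Qed.

Lemma subst_subst : forall t k m u0 u, k <= m ->
  subst m (subst k t u0) u = subst k (subst (S m) t u) (subst (m - k) u0 u).
Proof. induction t; intros; simpl.
  - nat_cases; try (f_equal; lia).
    + subst. rewrite <- (subst_shift_comm u0 (m-k) k 0) by lia. f_equal. lia.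
    + rewrite subst_shift_cancel by lia. reflexivity.
  - f_equal. rewrite IHt by lia. reflexivity.
  - f_equal; auto.
  - f_equal; auto. rewrite IHt1 by lia. reflexivity.
Qed.

Lemma occ_shift_lt : forall t k d c, k < c -> occ k (shift d c t) = occ k t.
Proof. induction t; intros; sm.
  - nat_cases.
  - apply IHt; lia.
  - rewrite IHt1, IHt2 by lia; auto.
  - rewrite IHt1, IHt2 by lia; auto.
Qed.

Lemma occ_shift_mid : forall t k d c, c <= k -> k < c + d -> occ k (shift d c t) = 0.
Proof. induction t; intros; sm.
  - nat_cases.
  - apply IHt; lia.
  - rewrite IHt1, IHt2 by lia; auto.
  - rewrite IHt1, IHt2 by lia; auto.
Qed.

Lemma occ_subst_lt : forall t k m u, k < m -> occ k (subst m t u) = occ k t.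
Proof. induction t; intros; sm.
  - nat_cases. apply occ_shift_mid; lia.
  - apply IHt; lia.
  - rewrite IHt1, IHt2 by lia; auto.
  - rewrite IHt1, IHt2 by lia; auto.
Qed.

Lemma occ_subst_ge : forall t k m p w, m <= k -> k < m + p ->
  occ k (subst m t (shift p 0 w)) = occ (S k) t.
Proof. induction t; intros; sm.
  - nat_cases. subst. rewrite shift_shift_merge by lia. apply occ_shift_mid; lia.
  - apply IHt; lia.
  - rewrite IHt1, IHt2 by lia; auto.
  - rewrite IHt1, IHt2 by lia; auto.
Qed.

Lemma dup_occ_split : forall c t t', dup c t t' -> occ c t' + occ (S c) t' = occ c t.
Proof. induction 1; cbn -[Nat.eqb Nat.ltb]; nat_cases. Qed.

Lemma dup_occ_lt : forall c t t', dup c t t' -> forall k, k < c -> occ k t' = occ k t.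
Proof. induction 1; intros; cbn -[Nat.eqb Nat.ltb]; nat_cases.
  - apply IHdup; lia.
  - rewrite IHdup1, IHdup2 by lia; auto.
  - rewrite IHdup1, IHdup2 by lia; auto.
Qed.

Lemma dup_occ_gt : forall c t t', dup c t t' -> forall k, c < k -> occ (S k) t' = occ k t.
Proof. induction 1; intros; cbn -[Nat.eqb Nat.ltb]; nat_cases.
  - apply IHdup; lia.
  - rewrite IHdup1, IHdup2 by lia; auto.
  - rewrite IHdup1, IHdup2 by lia; auto.
Qed.

Lemma dup_shift_gen : forall u m k e, e <= k -> k < m + e ->
  dup k (shift m e u) (shift (S m) e u).
Proof. induction u; intros; sm.
  - nat_cases. constructor; lia.
    replace (n + S m) with (S (n + m)) by lia. constructor; lia.
  - constructor. apply IHu; lia.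
  - constructor; auto.
  - constructor; auto. apply IHu1; lia.
Qed.

Lemma dup_subst : forall k t s, dup k t s -> forall m u, k < m ->
  dup k (subst m t u) (subst (S m) s u).
Proof. induction 1; intros; sm.
  - nat_cases. constructor; lia.
  - nat_cases. apply dup_var_x.
  - nat_cases. apply dup_var_y.
  - nat_cases. constructor; lia.
    + subst. apply dup_shift_gen; lia.
    + destruct n; [lia|]. simpl. constructor; lia.
  - constructor. apply IHdup; lia.
  - constructor; auto.
  - constructor; auto. apply IHdup1; lia.
Qed.

Lemma dup_shift_fw : forall k t s, dup k t s -> forall d c, k < c ->
  dup k (shift d c t) (shift d (S c) s).
Proof. induction 1; intros; sm.
  - nat_cases. constructor; lia.
  - nat_cases. apply dup_var_x.
  - nat_cases. apply dup_var_y.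
  - nat_cases. constructor; lia. replace (n+d) with (n+d) by lia. apply dup_var_gt; lia.
  - constructor. apply IHdup; lia.
  - constructor; auto.
  - constructor; auto. apply IHdup1; lia.
Qed.

Lemma dup_shift_inv : forall a k d c s, dup k (shift d c a) s -> k < c ->
  exists s0, s = shift d (S c) s0 /\ dup k a s0.
Proof. induction a; intros k d c s H Hk; cbn -[Nat.eqb Nat.ltb] in H.
  - destruct (Nat.ltb_spec n c).
    + exists s; split; [|exact H]. inversion H; subst; sm; nat_cases; reflexivity.
    + inversion H; subst; try lia.
      exists (Var (S n)). sm. nat_cases. split; [f_equal; lia|apply dup_var_gt; lia].
  - inversion H; subst. destruct (IHa _ _ _ _ H2 ltac:(lia)) as [z0 [-> Hs0]].
    exists (Lam z0). split; auto. constructor; auto.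
  - inversion H; subst. destruct (IHa1 _ _ _ _ H3 ltac:(lia)) as [z1 [-> Hs1]].
    destruct (IHa2 _ _ _ _ H5 ltac:(lia)) as [z2 [-> Hs2]].
    exists (App z1 z2). split; auto. constructor; auto.
  - inversion H; subst. destruct (IHa1 _ _ _ _ H3 ltac:(lia)) as [z1 [-> Hs1]].
    destruct (IHa2 _ _ _ _ H5 ltac:(lia)) as [z2 [-> Hs2]].
    exists (Sub z1 z2). split; auto. constructor; auto.
Qed.

Lemma dup_shift_indep : forall w c d e s, dup c (shift d e w) s -> e <= c -> c < d + e ->
  s = shift (S d) e w.
Proof. induction w; intros c d e s H H1 H2; simpl in H |- *.
  - destruct (Nat.ltb_spec n e).
    + inversion H; subst; try lia. reflexivity.
    + inversion H; subst; try lia. f_equal; lia.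
  - inversion H; subst. f_equal. apply (IHw (S c)); auto; lia.
  - inversion H; subst. f_equal; eauto.
  - inversion H; subst. f_equal; [apply (IHw1 (S c)) | apply (IHw2 c)]; auto; lia.
Qed.

Lemma dup_subst_merge : forall c t t', dup c t t' -> forall u,
  subst c (subst c t' (shift 1 0 u)) u = subst c t u.
Proof. induction 1; intros; sm.
  - nat_cases.
  - nat_cases. rewrite shift_shift_merge by lia. rewrite Nat.add_1_r.
    rewrite subst_shift_cancel by lia. reflexivity.
  - nat_cases.
  - nat_cases; f_equal; lia.
  - f_equal; auto.
  - f_equal; auto.
  - f_equal; auto.
Qed.

Lemma apply_L_nil : forall h, apply_L h [] = h.
Proof. reflexivity. Qed.
Lemma apply_L_cons : forall h x L, apply_L h (x :: L) = apply_L (Sub h x) L.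
Proof. reflexivity. Qed.
Lemma apply_L_app : forall h L1 L2, apply_L h (L1 ++ L2) = apply_L (apply_L h L1) L2.
Proof. intros. unfold apply_L. apply fold_left_app. Qed.

Lemma apply_L_shape : forall L h, L = [] \/ exists a b, apply_L h L = Sub a b.
Proof. induction L; intros; [left; auto|right].
  rewrite apply_L_cons. destruct (IHL (Sub h a)) as [->|H].
  - exists h, a. reflexivity.
  - exact H. Qed.

Lemma apply_L_Lam_inv : forall L t s, apply_L (Lam t) L = Lam s -> L = [] /\ t = s.
Proof. intros. destruct (apply_L_shape L (Lam t)) as [->|[a [b H1]]].
  - rewrite apply_L_nil in H. inversion H; auto.
  - congruence. Qed.

Lemma apply_L_Lam_not_App : forall L t a b, apply_L (Lam t) L <> App a b.
Proof. intros. destruct (apply_L_shape L (Lam t)) as [->|[x [y H1]]].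
  - rewrite apply_L_nil. discriminate.
  - rewrite H1. discriminate. Qed.

Lemma apply_L_Lam_not_Var : forall L t n, apply_L (Lam t) L <> Var n.
Proof. intros. destruct (apply_L_shape L (Lam t)) as [->|[x [y H1]]].
  - rewrite apply_L_nil. discriminate.
  - rewrite H1. discriminate. Qed.

Fixpoint shiftL (d c : nat) (L : list term) : list term :=
  match L with
  | [] => []
  | x :: L => shift d (c + length L) x :: shiftL d c L
  end.

Fixpoint substL (c : nat) (L : list term) (u : term) : list term :=
  match L with
  | [] => []
  | x :: L => subst (c + length L) x u :: substL c L u
  end.

Lemma shiftL_length : forall d c L, length (shiftL d c L) = length L.
Proof. induction L; simpl; auto. Qed.
Lemma substL_length : forall c L u, length (substL c L u) = length L.
Proof. induction L; simpl; auto. Qed.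

Lemma shift_apply_L : forall L h d c,
  shift d c (apply_L h L) = apply_L (shift d (c + length L) h) (shiftL d c L).
Proof. induction L; intros; cbn [length shiftL].
  - rewrite !apply_L_nil, Nat.add_0_r. reflexivity.
  - rewrite !apply_L_cons, IHL. cbn [shift]. rewrite Nat.add_succ_r. reflexivity.
Qed.

Lemma subst_apply_L : forall L h c u,
  subst c (apply_L h L) u = apply_L (subst (c + length L) h u) (substL c L u).
Proof. induction L; intros; cbn [length substL].
  - rewrite !apply_L_nil, Nat.add_0_r. reflexivity.
  - rewrite !apply_L_cons, IHL. cbn [subst]. rewrite Nat.add_succ_r. reflexivity.
Qed.

Lemma shift_apply_L_inv : forall L h d c a, apply_L h L = shift d c a ->
  exists h0 L0, a = apply_L h0 L0 /\ h = shift d (c + length L0) h0 /\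
    L = shiftL d c L0 /\ length L0 = length L.
Proof. induction L as [|x L IHL]; intros h d c a H.
  - exists a, []. rewrite apply_L_nil in H. simpl. rewrite Nat.add_0_r. auto.
  - rewrite apply_L_cons in H. destruct (IHL _ _ _ _ H) as [h1 [L1 [Ha [Hh [HL Hlen]]]]].
    destruct h1; simpl in Hh; try (destruct (_ <? _); discriminate); try discriminate.
    inversion Hh; subst. exists h1_1, (h1_2 :: L1). simpl.
    rewrite Nat.add_succ_r, <- Hlen. auto.
Qed.

Lemma step_shift : forall t t', lj_step t t' -> forall d c, lj_step (shift d c t) (shift d c t').
Proof. induction 1; intros; simpl.
  - rewrite !shift_apply_L. simpl.
    replace (shift d (c + length L) (shift (length L) 0 u))
      with (shift (length (shiftL d c L)) 0 (shift d c u)).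
    + apply lj_dB.
    + rewrite shiftL_length. rewrite shift_shift_comm by lia. reflexivity.
  - replace c with (c - 0) at 2 by lia. rewrite shift_subst_comm by lia.
    rewrite Nat.sub_0_r. apply lj_w. rewrite occ_shift_lt by lia. auto.
  - replace c with (c - 0) at 2 by lia. rewrite shift_subst_comm by lia.
    rewrite Nat.sub_0_r. apply lj_d. rewrite occ_shift_lt by lia. auto.
  - replace (shift d (S c) (shift 1 0 u)) with (shift 1 0 (shift d c u)).
    + apply lj_c.
      * rewrite occ_shift_lt by lia. auto.
      * apply dup_shift_fw; auto; lia.
      * rewrite occ_shift_lt by lia. auto.
      * rewrite occ_shift_lt by lia. auto.
    + rewrite <- (shift_shift_comm u d 1 c 0) by lia. f_equal. lia.
  - apply lj_lam; auto.
  - apply lj_appl; auto.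
  - apply lj_appr; auto.
  - apply lj_subl; auto.
  - apply lj_subr; auto.
Qed.

Lemma step_subst : forall t t', lj_step t t' -> forall c u, lj_step (subst c t u) (subst c t' u).
Proof. induction 1; intros; simpl.
  - rewrite !subst_apply_L. simpl.
    replace (subst (c + length L) (shift (length L) 0 u) u0)
      with (shift (length (substL c L u0)) 0 (subst c u u0)).
    + apply lj_dB.
    + rewrite substL_length. rewrite subst_shift_comm by lia. reflexivity.
  - rewrite subst_subst by lia. rewrite Nat.sub_0_r. apply lj_w.
    rewrite occ_subst_lt by lia. auto.
  - rewrite subst_subst by lia. rewrite Nat.sub_0_r. apply lj_d.
    rewrite occ_subst_lt by lia. auto.
  - replace (subst (S c) (shift 1 0 u) u0) with (shift 1 0 (subst c u u0)).
    + apply lj_c.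
      * rewrite occ_subst_lt by lia. auto.
      * apply dup_subst; auto; lia.
      * rewrite occ_subst_lt by lia. auto.
      * rewrite occ_subst_lt by lia. auto.
    + rewrite <- (subst_shift_comm u c 1 0) by lia. f_equal. lia.
  - apply lj_lam; auto.
  - apply lj_appl; auto.
  - apply lj_appr; auto.
  - apply lj_subl; auto.
  - apply lj_subr; auto.
Qed.

Ltac shift_inv H :=
  cbn -[Nat.eqb Nat.ltb] in H;
  try (destruct (_ <? _); discriminate); try discriminate.

Lemma step_shift_inv : forall t b, lj_step t b -> forall d c a, t = shift d c a ->
  exists a', b = shift d c a' /\ lj_step a a'.
Proof. induction 1; intros d0 c0 a0 Heq; destruct a0; shift_inv Heq;
  inversion Heq; subst.
  - destruct (shift_apply_L_inv _ _ _ _ _ H0) as [h0 [L0 [-> [Hh [-> Hlen]]]]].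
    destruct h0; shift_inv Hh. inversion Hh; subst.
    exists (apply_L (Sub h0 (shift (length L0) 0 a0_2)) L0). split.
    + rewrite shift_apply_L. cbn [shift]. rewrite shiftL_length.
      rewrite shift_shift_comm by lia. reflexivity.
    + apply lj_dB.
  - exists (subst 0 a0_1 a0_2). split.
    + replace c0 with (c0 - 0) at 1 by lia. rewrite shift_subst_comm by lia.
      rewrite Nat.sub_0_r. reflexivity.
    + apply lj_w. rewrite occ_shift_lt in H by lia. auto.
  - exists (subst 0 a0_1 a0_2). split.
    + replace c0 with (c0 - 0) at 1 by lia. rewrite shift_subst_comm by lia.
      rewrite Nat.sub_0_r. reflexivity.
    + apply lj_d. rewrite occ_shift_lt in H by lia. auto.
  - destruct (dup_shift_inv _ _ _ _ _ H0 ltac:(lia)) as [s0 [-> Hd]].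
    exists (Sub (Sub s0 (shift 1 0 a0_2)) a0_2). split.
    + cbn [shift]. f_equal. f_equal.
      rewrite <- (shift_shift_comm a0_2 d0 1 c0 0) by lia. f_equal. lia.
    + rewrite occ_shift_lt in H, H1, H2 by lia. apply lj_c; auto.
  - destruct (IHlj_step _ _ _ eq_refl) as [a' [-> Ha']].
    exists (Lam a'). split; auto. apply lj_lam; auto.
  - destruct (IHlj_step _ _ _ eq_refl) as [a' [-> Ha']].
    exists (App a' a0_2). split; auto. apply lj_appl; auto.
  - destruct (IHlj_step _ _ _ eq_refl) as [a' [-> Ha']].
    exists (App a0_1 a'). split; auto. apply lj_appr; auto.
  - destruct (IHlj_step _ _ _ eq_refl) as [a' [-> Ha']].
    exists (Sub a' a0_2). split; auto. apply lj_subl; auto.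
  - destruct (IHlj_step _ _ _ eq_refl) as [a' [-> Ha']].
    exists (Sub a0_1 a'). split; auto. apply lj_subr; auto.
Qed.

Definition SNj := Acc (fun a b => lj_step b a).

Inductive star : term -> term -> Prop :=
| st_refl a : star a a
| st_step a b c : lj_step a b -> star b c -> star a c.

Definition plus a b := exists c, lj_step a c /\ star c b.
Definition SNp := Acc (fun a b => plus b a).

Lemma star_trans : forall a b c, star a b -> star b c -> star a c.
Proof. induction 1; intros; auto. econstructor; eauto. Qed.
Lemma star_one : forall a b, lj_step a b -> star a b.
Proof. intros. econstructor; eauto. constructor. Qed.
Lemma star_split : forall a b, star a b -> a = b \/ plus a b.
Proof. intros a b H; inversion H; subst; [left; auto | right; exists b0; auto]. Qed.
Lemma plus_one : forall a b, lj_step a b -> plus a b.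
Proof. intros. exists b; split; auto; constructor. Qed.
Lemma plus_star_plus : forall a b c, plus a b -> star b c -> plus a c.
Proof. intros a b c [x [H1 H2]] H3. exists x; split; auto. eapply star_trans; eauto. Qed.

Lemma SNp_star : forall a b, SNp a -> star a b -> SNp b.
Proof. intros a b Ha Hs. destruct (star_split _ _ Hs) as [<-|Hp]; auto.
  apply (Acc_inv Ha); auto. Qed.

Lemma SNj_SNp : forall t, SNj t -> SNp t.
Proof. induction 1 as [t _ IH]. constructor. intros y [c [Hc Hs]].
  apply (SNp_star c); auto. Qed.

Lemma SNj_step : forall a b, SNj a -> lj_step a b -> SNj b.
Proof. intros a b Ha H. apply (Acc_inv Ha); auto. Qed.

Lemma SNj_star : forall a b, SNj a -> star a b -> SNj b.
Proof. intros a b Ha H; induction H; auto. apply IHstar. eapply SNj_step; eauto. Qed.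

Lemma star_map : forall (f : term -> term),
  (forall a b, lj_step a b -> lj_step (f a) (f b)) ->
  forall a b, star a b -> star (f a) (f b).
Proof. intros f Hf a b H; induction H. constructor. econstructor; eauto. Qed.

Lemma star_lam : forall a b, star a b -> star (Lam a) (Lam b).
Proof. apply star_map. intros; apply lj_lam; auto. Qed.
Lemma star_appl : forall a b u, star a b -> star (App a u) (App b u).
Proof. intros a b u. apply (star_map (fun x => App x u)). intros; apply lj_appl; auto. Qed.
Lemma star_appr : forall a b u, star a b -> star (App u a) (App u b).
Proof. intros a b u. apply (star_map (fun x => App u x)). intros; apply lj_appr; auto. Qed.
Lemma star_subl : forall a b u, star a b -> star (Sub a u) (Sub b u).
Proof. intros a b u. apply (star_map (fun x => Sub x u)). intros; apply lj_subl; auto. Qed.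
Lemma star_subr : forall a b u, star a b -> star (Sub u a) (Sub u b).
Proof. intros a b u. apply (star_map (fun x => Sub u x)). intros; apply lj_subr; auto. Qed.
Lemma star_subst1 : forall a b c u, star a b -> star (subst c a u) (subst c b u).
Proof. intros a b c u. apply (star_map (fun x => subst c x u)). intros; apply step_subst; auto. Qed.

Lemma step_subst2 : forall t c u u', lj_step u u' -> star (subst c t u) (subst c t u').
Proof. induction t; intros; cbn -[Nat.eqb Nat.ltb].
  - destruct (n <? c); [constructor|]. destruct (n =? c); [|constructor].
    apply star_one. apply step_shift; auto.
  - apply star_lam; auto.
  - eapply star_trans. apply star_appl; eauto. apply star_appr; eauto.
  - eapply star_trans. apply star_subl; eauto. apply star_subr; eauto.
Qed.

Lemma SNj_shift : forall u, SNj u -> forall d c, SNj (shift d c u).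
Proof. induction 1 as [u _ IH]. intros d c. constructor. intros y Hy.
  destruct (step_shift_inv _ _ Hy d c u eq_refl) as [a' [-> Ha']]. apply IH; auto. Qed.

Lemma SNj_lam : forall s, SNj s -> SNj (Lam s).
Proof. induction 1 as [s _ IH]. constructor. intros y Hy. inversion Hy; subst.
  apply IH; auto. Qed.

Definition apps (h : term) (vs : list term) : term := fold_left App vs h.
Lemma apps_nil : forall h, apps h [] = h. Proof. reflexivity. Qed.
Lemma apps_cons : forall h v vs, apps h (v :: vs) = apps (App h v) vs. Proof. reflexivity. Qed.
Lemma apps_app : forall h vs1 vs2, apps h (vs1 ++ vs2) = apps (apps h vs1) vs2.
Proof. intros. unfold apps. apply fold_left_app. Qed.

Lemma step_apps_head : forall vs h h', lj_step h h' -> lj_step (apps h vs) (apps h' vs).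
Proof. induction vs; intros; auto. rewrite !apps_cons. apply IHvs. apply lj_appl; auto. Qed.

Lemma star_apps_head : forall vs h h', star h h' -> star (apps h vs) (apps h' vs).
Proof. intros vs. apply (star_map (fun x => apps x vs)). intros; apply step_apps_head; auto. Qed.

Lemma step_apps_arg : forall vs1 vs2 h v v', lj_step v v' ->
  lj_step (apps h (vs1 ++ v :: vs2)) (apps h (vs1 ++ v' :: vs2)).
Proof. intros. rewrite !apps_app, !apps_cons. apply step_apps_head. apply lj_appr; auto. Qed.

Lemma step_apps_inv : forall vs h b, lj_step (apps h vs) b ->
  (exists h', lj_step h h' /\ b = apps h' vs) \/
  (exists vs1 v v' vs2, vs = vs1 ++ v :: vs2 /\ lj_step v v' /\ b = apps h (vs1 ++ v' :: vs2)) \/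
  (exists v vs2 t L, vs = v :: vs2 /\ h = apply_L (Lam t) L /\
     b = apps (apply_L (Sub t (shift (length L) 0 v)) L) vs2).
Proof. induction vs as [|v vs IH]; intros h b H.
  - left. exists b. auto.
  - rewrite apps_cons in H. destruct (IH _ _ H) as [[h' [Hh ->]]|[[vs1 [x [x' [vs2 [-> [Hx ->]]]]]]|[x [vs2 [t [L [-> [Heq ->]]]]]]]].
    + inversion Hh; subst.
      * right; right. exists v, vs, t, L. auto.
      * left. exists t'. auto.
      * right; left. exists [], v, u', vs. auto.
    + right; left. exists (v :: vs1), x, x', vs2. auto.
    + exfalso. symmetry in Heq. eapply apply_L_Lam_not_App; eauto.
Qed.

Inductive jroot : term -> term -> Prop :=
| jr_w t u : occ 0 t = 0 -> jroot (Sub t u) (subst 0 t u)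
| jr_d t u : occ 0 t = 1 -> jroot (Sub t u) (subst 0 t u)
| jr_c t s u : 2 <= occ 0 t -> dup 0 t s -> 1 <= occ 0 s -> 1 <= occ 1 s ->
    jroot (Sub t u) (Sub (Sub s (shift 1 0 u)) u).

Lemma step_applyL_inv : forall L t b, lj_step (apply_L t L) b ->
  (exists t', lj_step t t' /\ b = apply_L t' L) \/
  (exists L1 x x' L2, L = L1 ++ x :: L2 /\ lj_step x x' /\ b = apply_L t (L1 ++ x' :: L2)) \/
  (exists L1 x L2 r, L = L1 ++ x :: L2 /\ jroot (Sub (apply_L t L1) x) r /\ b = apply_L r L2).
Proof. induction L as [|x L IH]; intros t b H.
  - left. exists b. auto.
  - rewrite apply_L_cons in H.
    destruct (IH _ _ H) as [[t'' [Ht ->]]|[[L1 [y [y' [L2 [-> [Hy ->]]]]]]|[L1 [y [L2 [r [-> [Hr ->]]]]]]]].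
    + inversion Ht; subst.
      * right; right. exists [], x, L, (subst 0 t x). repeat split; auto. apply jr_w; auto.
      * right; right. exists [], x, L, (subst 0 t x). repeat split; auto. apply jr_d; auto.
      * right; right. exists [], x, L, (Sub (Sub s (shift 1 0 x)) x). repeat split; auto. apply jr_c; eauto.
      * left. exists t'. auto.
      * right; left. exists [], x, u', L. auto.
    + right; left. exists (x :: L1), y, y', L2. auto.
    + right; right. exists (x :: L1), y, L2, r. auto.
Qed.

Inductive hv : term -> Prop :=
| hv_var n : hv (Var n)
| hv_app a b : hv a -> hv (App a b).

Lemma hv_not_applyL : forall L t, hv (apply_L (Lam t) L) -> False.
Proof. intros L t H. destruct (apply_L_shape L (Lam t)) as [->|[x [y H1]]].
  - inversion H.
  - rewrite H1 in H. inversion H. Qed.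

Lemma hv_step : forall a b, lj_step a b -> hv a -> hv b.
Proof. induction 1; intros Hh; inversion Hh; subst.
  - exfalso; eapply hv_not_applyL; eauto.
  - constructor; auto.
  - constructor; auto.
Qed.

Lemma SNj_app_hv : forall a, SNj a -> hv a -> forall b, SNj b -> SNj (App a b).
Proof. induction 1 as [a Ha IHa]. intros Hh b Hb. induction Hb as [b Hb IHb].
  constructor. intros y Hy. inversion Hy; subst.
  - exfalso; eapply hv_not_applyL; eauto.
  - apply IHa; auto. eapply hv_step; eauto. constructor; auto.
  - apply IHb; auto.
Qed.

Lemma SNj_apps_hv : forall vs h, hv h -> SNj h -> Forall SNj vs -> SNj (apps h vs).
Proof. induction vs; intros h Hh HS HF; auto. inversion HF; subst.
  rewrite apps_cons. apply IHvs; auto. constructor; auto. apply SNj_app_hv; auto. Qed.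

Fixpoint mko (n : nat) (ws : list term) : list term :=
  match ws with [] => [] | w :: ws => shift (n + length ws) 0 w :: mko n ws end.
Fixpoint Fo (n : nat) (t : term) (ws : list term) : term :=
  match ws with [] => t | w :: ws => Fo n (subst 0 t (shift (n + length ws) 0 w)) ws end.
Definition J t ws := apply_L t (mko 0 ws).
Definition F t ws := Fo 0 t ws.
Definition g n := S (2 * n - 2).
Fixpoint ms (c : nat) (t : term) (ws : list term) : nat :=
  match ws with [] => 0 | _ :: ws => g (occ c t) + ms (S c) t ws end.

Lemma mko_length : forall n ws, length (mko n ws) = length ws.
Proof. induction ws; simpl; auto. Qed.

Lemma mko_app : forall n ws1 ws2, mko n (ws1 ++ ws2) = mko (n + length ws2) ws1 ++ mko n ws2.
Proof. induction ws1; intros; simpl; auto. rewrite IHws1, length_app.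
  f_equal. f_equal. lia. Qed.

Lemma Fo_app : forall n ws1 ws2 t, Fo n t (ws1 ++ ws2) = Fo n (Fo (n + length ws2) t ws1) ws2.
Proof. induction ws1; intros; simpl; auto. rewrite IHws1, length_app.
  do 4 f_equal. lia. Qed.

Lemma Fo_subst0 : forall ws1 t m u,
  subst 0 (Fo (S m) t ws1) u = Fo m (subst (length ws1) t u) ws1.
Proof. induction ws1 as [|w ws1 IH]; intros; simpl; auto.
  rewrite IH. f_equal. rewrite subst_subst by lia. rewrite Nat.sub_0_r.
  rewrite subst_shift_cancel by lia. reflexivity. Qed.

Lemma Fpull : forall ws1 w ws2 t,
  F t (ws1 ++ w :: ws2) = F (subst (length ws1) t (shift (length ws2) 0 w)) (ws1 ++ ws2).
Proof. intros. unfold F. rewrite !Fo_app. simpl. rewrite Fo_subst0. reflexivity. Qed.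

Lemma Fo_step : forall ws n t t', lj_step t t' -> lj_step (Fo n t ws) (Fo n t' ws).
Proof. induction ws; intros; simpl; auto. apply IHws. apply step_subst; auto. Qed.

Lemma Fo_star : forall ws n t t', star t t' -> star (Fo n t ws) (Fo n t' ws).
Proof. intros ws n. apply (star_map (fun x => Fo n x ws)). intros; apply Fo_step; auto. Qed.

Lemma mko_split : forall ws n L1 x L2, mko n ws = L1 ++ x :: L2 ->
  exists ws1 w ws2, ws = ws1 ++ w :: ws2 /\ L1 = mko (n + S (length ws2)) ws1 /\
    x = shift (n + length ws2) 0 w /\ L2 = mko n ws2.
Proof. induction ws as [|w ws IH]; intros n L1 x L2 H.
  - destruct L1; discriminate.
  - simpl in H. destruct L1 as [|y L1].
    + inversion H; subst. exists [], w, ws. auto.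
    + inversion H; subst. destruct (IH _ _ _ _ H2) as [ws1 [w' [ws2 [-> [-> [-> ->]]]]]].
      exists (w :: ws1), w', ws2. split; [reflexivity|]. split; [|split; reflexivity].
      cbn [mko length]. rewrite length_app. cbn [length]. f_equal. f_equal. lia.
Qed.

Lemma occ_applyL_mko : forall ws t c m, c <= m ->
  occ c (apply_L t (mko (S m) ws)) = occ (c + length ws) t.
Proof. induction ws as [|w ws IH]; intros; cbn [mko length].
  - rewrite apply_L_nil. f_equal. lia.
  - rewrite apply_L_cons, IH by auto. cbn [occ]. rewrite occ_shift_mid by lia.
    rewrite Nat.add_0_r, Nat.add_succ_r. reflexivity.
Qed.

Lemma subst_applyL_mko : forall ws t c m u, c <= m ->
  subst c (apply_L t (mko (S m) ws)) u = apply_L (subst (c + length ws) t u) (mko m ws).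
Proof. induction ws as [|w ws IH]; intros; cbn [mko length].
  - rewrite !apply_L_nil. f_equal. lia.
  - rewrite !apply_L_cons, IH by auto. cbn [subst].
    change (S m + length ws) with (S (m + length ws)).
    rewrite subst_shift_cancel by lia. rewrite Nat.add_succ_r. reflexivity.
Qed.

Lemma dup_applyL_mko : forall ws t c m s, c <= m ->
  dup c (apply_L t (mko (S m) ws)) s ->
  exists t', s = apply_L t' (mko (S (S m)) ws) /\ dup (c + length ws) t t'.
Proof. induction ws as [|w ws IH]; intros t c m s Hc H; cbn [mko length] in *.
  - rewrite apply_L_nil in H. exists s. rewrite Nat.add_0_r. auto.
  - rewrite apply_L_cons in H. destruct (IH _ _ _ _ Hc H) as [t'' [-> Hd]].
    inversion Hd; subst.
    apply dup_shift_indep in H5; try lia. subst.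
    exists s1. split.
    + rewrite apply_L_cons. reflexivity.
    + replace (c + S (length ws)) with (S (c + length ws)) by lia. auto.
Qed.

Lemma ms_app : forall ws1 ws2 c t, ms c t (ws1 ++ ws2) = ms c t ws1 + ms (c + length ws1) t ws2.
Proof. induction ws1; intros; simpl. f_equal; lia. rewrite IHws1.
  replace (S c + length ws1) with (c + S (length ws1)) by lia. lia. Qed.

Lemma ms_ext : forall ws c c' t t', (forall i, i < length ws -> occ (c + i) t = occ (c' + i) t') ->
  ms c t ws = ms c' t' ws.
Proof. induction ws; intros; cbn [ms]; auto. f_equal.
  - f_equal. specialize (H 0). rewrite !Nat.add_0_r in H. apply H. simpl; lia.
  - apply IHws. intros. specialize (H (S i)). simpl in H.
    replace (S c + i) with (c + S i) by lia. replace (S c' + i) with (c' + S i) by lia.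
    apply H. lia.
Qed.

Lemma Fo_dB : forall ws s L, exists s' L', length L' = length L /\
  Fo 0 (apply_L (Lam s) L) ws = apply_L (Lam s') L' /\
  forall v, Fo 0 (apply_L (Sub s (shift (length L + length ws) 0 v)) L) ws =
            apply_L (Sub s' (shift (length L) 0 v)) L'.
Proof. induction ws as [|w ws IH]; intros.
  - exists s, L. simpl. rewrite Nat.add_0_r. auto.
  - simpl. rewrite !subst_apply_L. simpl.
    destruct (IH (subst (S (length L)) s (shift (length ws) 0 w)) (substL 0 L (shift (length ws) 0 w)))
      as [s' [L' [Hlen [H1 H2]]]].
    exists s', L'. rewrite substL_length in Hlen. split; auto. split; auto.
    intros v. rewrite subst_apply_L. cbn [subst]. rewrite substL_length in H2. rewrite <- H2.
    replace (subst (0 + length L) (shift (length L + S (length ws)) 0 v) (shift (length ws) 0 w))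
      with (shift (length L + length ws) 0 v). reflexivity.
    rewrite Nat.add_succ_r. rewrite subst_shift_cancel by lia. reflexivity.
Qed.

Lemma applyL_Lam_decomp : forall L2 t s L'', apply_L t L2 = apply_L (Lam s) L'' ->
  exists L1, t = apply_L (Lam s) L1 /\ L'' = L1 ++ L2.
Proof. induction L2 as [|x L2 IH] using rev_ind; intros t s L'' H.
  - exists L''. rewrite apply_L_nil in H. rewrite app_nil_r. auto.
  - rewrite apply_L_app in H. destruct L'' as [|y L3] using rev_ind.
    + rewrite apply_L_nil in H. simpl in H. discriminate.
    + clear IHL3. rewrite apply_L_app in H. simpl in H. inversion H; subst.
      destruct (IH _ _ _ H1) as [L1 [-> ->]]. exists L1. rewrite app_assoc. auto.
Qed.

Definition lstep (ws ws' : list term) := exists ws1 w w' ws2,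
  ws = ws1 ++ w :: ws2 /\ ws' = ws1 ++ w' :: ws2 /\ lj_step w w'.
Definition Accl := Acc (fun a b => lstep b a).

Lemma Accl_cons : forall w, SNj w -> forall ws, Accl ws -> Accl (w :: ws).
Proof. induction 1 as [w _ IHw]. intros ws Hws. induction Hws as [ws Hws IHws].
  constructor. intros y [ws1 [x [x' [ws2 [Heq [-> Hx]]]]]].
  destruct ws1 as [|z ws1]; simpl in Heq; inversion Heq; subst.
  - apply IHw; auto. constructor; auto.
  - simpl. apply IHws. exists ws1, x, x', ws2. auto.
Qed.

Lemma Forall_Accl : forall ws, Forall SNj ws -> Accl ws.
Proof. induction 1. constructor. intros y [ws1 [x [x' [ws2 [Heq _]]]]].
  destruct ws1; discriminate. apply Accl_cons; auto. Qed.

Lemma Forall_replace : forall ws1 w w' ws2, Forall SNj (ws1 ++ w :: ws2) -> SNj w' ->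
  Forall SNj (ws1 ++ w' :: ws2).
Proof. intros. apply Forall_app in H as [H1 H2]. inversion H2; subst.
  apply Forall_app; split; auto. Qed.

Lemma Forall_remove : forall ws1 w ws2, Forall SNj (ws1 ++ w :: ws2) ->
  Forall SNj (ws1 ++ ws2) /\ SNj w.
Proof. intros. apply Forall_app in H as [H1 H2]. inversion H2; subst.
  split; auto. apply Forall_app; split; auto. Qed.

Lemma ms_len : forall ws ws' c t, length ws = length ws' -> ms c t ws = ms c t ws'.
Proof. induction ws; destruct ws'; intros; simpl in *; try discriminate; auto. Qed.

Lemma IE_main : forall N, SNp N -> forall m ws, Accl ws -> forall t vs,
  Forall SNj ws -> apps (F t ws) vs = N -> ms 0 t ws = m -> SNj (apps (J t ws) vs).
Proof.
  intros N HN. induction HN as [N _ IHN].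
  intros m. induction m as [m IHm] using (well_founded_induction lt_wf).
  intros ws Hacc. induction Hacc as [ws _ IHws].
  intros t vs HF HNe Hm. subst N. constructor. intros b Hb.
  destruct (step_apps_inv _ _ _ Hb) as [[h' [Hh ->]] | [[vs1 [v [v' [vs2 [-> [Hv ->]]]]]] |
      [v [vs2 [s [L [-> [Heq ->]]]]]]]].
  - unfold J in Hh.
    destruct (step_applyL_inv _ _ _ Hh) as [[t' [Ht ->]] |
      [[L1 [x [x' [L2 [HL [Hx ->]]]]]] | [L1 [x [L2 [r [HL [Hr ->]]]]]]]].
    + change (SNj (apps (J t' ws) vs)).
      eapply IHN; eauto using Forall_Accl.
      apply plus_one. apply step_apps_head. apply Fo_step. auto.
    + destruct (mko_split _ _ _ _ _ HL) as [ws1 [w [ws2 [-> [-> [-> ->]]]]]].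
      destruct (step_shift_inv _ _ Hx _ _ w eq_refl) as [w' [-> Hw]].
      assert (Hws : Forall SNj (ws1 ++ w' :: ws2)).
      { apply (Forall_replace _ w); auto.
        destruct (Forall_remove _ _ _ HF) as [_ Hsw]. eapply SNj_step; eauto. }
      replace (apply_L t (mko (0 + S (length ws2)) ws1 ++ shift (0 + length ws2) 0 w' :: mko 0 ws2))
        with (J t (ws1 ++ w' :: ws2)) by (unfold J; rewrite mko_app; reflexivity).
      assert (Hst : star (apps (F t (ws1 ++ w :: ws2)) vs) (apps (F t (ws1 ++ w' :: ws2)) vs)).
      { rewrite !Fpull. apply star_apps_head. apply Fo_star. apply step_subst2.
        apply step_shift; auto. }
      destruct (star_split _ _ Hst) as [Heq | Hp].
      * apply (IHws (ws1 ++ w' :: ws2)).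
        -- exists ws1, w, w', ws2. auto.
        -- exact Hws.
        -- symmetry; exact Heq.
        -- rewrite <- Hm. apply ms_len. rewrite !length_app. reflexivity.
      * eapply IHN; eauto using Forall_Accl.
    + destruct (mko_split _ _ _ _ _ HL) as [ws1 [w [ws2 [-> [-> [-> ->]]]]]].
      simpl in Hr.
      destruct (Forall_remove _ _ _ HF) as [HF' Hsw].
      inversion Hr as [? ? Hocc | ? ? Hocc | ? s0 ? Hocc Hdup Hs0 Hs1]; subst.
      *
        rewrite subst_applyL_mko by lia. simpl.
        set (t0 := subst (length ws1) t (shift (length ws2) 0 w)).
        replace (apply_L (apply_L t0 (mko (length ws2) ws1)) (mko 0 ws2))
          with (J t0 (ws1 ++ ws2)) by (unfold J; rewrite mko_app, apply_L_app; reflexivity).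
        eapply IHm; eauto using Forall_Accl.
        -- rewrite !ms_app. cbn [ms]. 
           rewrite (ms_ext ws1 0 0 t0 t). rewrite (ms_ext ws2 (0 + length ws1) (S (0 + length ws1)) t0 t).
           unfold g; lia.
           ++ intros i Hi. unfold t0. rewrite occ_subst_ge by lia. reflexivity.
           ++ intros i Hi. unfold t0. rewrite occ_subst_lt by lia. reflexivity.
        -- unfold t0. rewrite Fpull. reflexivity.
      *
        rewrite subst_applyL_mko by lia. simpl.
        set (t0 := subst (length ws1) t (shift (length ws2) 0 w)).
        replace (apply_L (apply_L t0 (mko (length ws2) ws1)) (mko 0 ws2))
          with (J t0 (ws1 ++ ws2)) by (unfold J; rewrite mko_app, apply_L_app; reflexivity).
        eapply IHm; eauto using Forall_Accl.
        -- rewrite !ms_app. cbn [ms]. 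
           rewrite (ms_ext ws1 0 0 t0 t). rewrite (ms_ext ws2 (0 + length ws1) (S (0 + length ws1)) t0 t).
           unfold g; lia.
           ++ intros i Hi. unfold t0. rewrite occ_subst_ge by lia. reflexivity.
           ++ intros i Hi. unfold t0. rewrite occ_subst_lt by lia. reflexivity.
        -- unfold t0. rewrite Fpull. reflexivity.
      *
        destruct (dup_applyL_mko ws1 t 0 (length ws2) s0 ltac:(lia) Hdup) as [t' [-> Hd]].
        rewrite occ_applyL_mko in Hocc, Hs0, Hs1 by lia. simpl in Hocc, Hs0, Hs1.
        replace (apply_L (Sub (Sub (apply_L t' (mko (S (S (length ws2))) ws1))
                   (shift 1 0 (shift (length ws2) 0 w))) (shift (length ws2) 0 w)) (mko 0 ws2))
          with (J t' (ws1 ++ w :: w :: ws2)).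
        2:{ unfold J. rewrite mko_app, apply_L_app. cbn [mko length Nat.add].
            rewrite !apply_L_cons. rewrite shift_shift_merge by lia. reflexivity. }
        assert (HFc : Forall SNj (ws1 ++ w :: w :: ws2)).
        { apply Forall_app in HF' as [Ha Hb']. apply Forall_app. split; auto. }
        eapply IHm; eauto using Forall_Accl.
        -- rewrite !ms_app. cbn [ms length].
           rewrite (ms_ext ws1 0 0 t' t). rewrite (ms_ext ws2 (S (S (0 + length ws1))) (S (0 + length ws1)) t' t).
           pose proof (dup_occ_split _ _ _ Hd). cbn [Nat.add] in *. unfold g; lia.
           ++ intros i Hi. replace (S (S (0 + length ws1)) + i) with (S (S (length ws1) + i)) by lia.
              rewrite (dup_occ_gt _ _ _ Hd) by lia. f_equal.
           ++ intros i Hi. rewrite (dup_occ_lt _ _ _ Hd) by lia. reflexivity.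
        -- change (F t' (ws1 ++ w :: (w :: ws2))) with (F t' (ws1 ++ w :: (w :: ws2))).
           rewrite Fpull. rewrite (Fpull ws1 w ws2 t). 
           rewrite Fpull. cbn [length].
           rewrite <- (dup_subst_merge _ _ _ Hd). cbn [Nat.add].
           rewrite shift_shift_merge by lia. reflexivity.
  - eapply IHN; eauto using Forall_Accl.
    apply plus_one. apply step_apps_arg. auto.
  - unfold J in Heq. destruct (applyL_Lam_decomp _ _ _ _ Heq) as [L1 [-> ->]].
    destruct (Fo_dB ws s L1) as [s' [L' [Hlen [H1 H2]]]].
    rewrite length_app, mko_length, apply_L_app.
    change (SNj (apps (J (apply_L (Sub s (shift (length L1 + length ws) 0 v)) L1) ws) vs2)).
    eapply IHN; eauto using Forall_Accl.
    apply plus_one. rewrite apps_cons. apply step_apps_head. unfold F. rewrite H1, H2.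
    rewrite <- Hlen. apply lj_dB.
Qed.

Lemma SNp_SNj : forall t, SNp t -> SNj t.
Proof. induction 1 as [t _ IH]. constructor. intros y Hy. apply IH. apply plus_one; auto. Qed.

Lemma IE_one : forall s u vs, SNj u -> SNj (apps (subst 0 s u) vs) -> SNj (apps (Sub s u) vs).
Proof. intros. assert (H1 : apps (Sub s u) vs = apps (J s [u]) vs).
  { unfold J. simpl. rewrite shift_0. reflexivity. }
  rewrite H1. eapply (IE_main _ (SNj_SNp _ H0)); eauto.
  - apply Forall_Accl. constructor; auto.
  - unfold F. simpl. rewrite shift_0. reflexivity.
Qed.

Lemma redex_main : forall N, SNp N -> forall u, SNj u -> forall s vs,
  apps (subst 0 s u) vs = N -> SNj (apps (App (Lam s) u) vs).
Proof.
  intros N HN. induction HN as [N HNacc IHN].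
  intros u Hu. induction Hu as [u Hu IHu].
  intros s vs Heq. subst N. constructor. intros b Hb.
  destruct (step_apps_inv _ _ _ Hb) as [[h' [Hh ->]] | [[vs1 [v [v' [vs2 [-> [Hv ->]]]]]] |
      [v [vs2 [t [L [-> [Heq ->]]]]]]]].
  - inversion Hh; subst.
    + match goal with H : apply_L (Lam _) _ = Lam _ |- _ =>
        destruct (apply_L_Lam_inv _ _ _ H) as [-> ->] end.
      rewrite apply_L_nil. simpl. rewrite shift_0. apply IE_one.
      * constructor; auto.
      * apply SNp_SNj. constructor; auto.
    + match goal with H : lj_step (Lam _) _ |- _ => inversion H; subst end.
      eapply IHN; eauto.
      * apply plus_one. apply step_apps_head. apply step_subst. eauto.
      * constructor; auto.
    + assert (Hst : star (apps (subst 0 s u) vs) (apps (subst 0 s u') vs)).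
      { apply star_apps_head. apply step_subst2. auto. }
      destruct (star_split _ _ Hst) as [Heq | Hp].
      * eapply IHu; eauto.
      * eapply IHN; eauto. apply (Acc_intro u Hu); auto.
  - eapply IHN; eauto.
    + apply plus_one. apply step_apps_arg. auto.
    + constructor; auto.
  - exfalso. symmetry in Heq. eapply apply_L_Lam_not_App; eauto.
Qed.


Lemma Acc_SN : forall (R : term -> term -> Prop) t, Acc (fun a b => R b a) t -> SN R t.
Proof. intros R t H [f [H0 Hf]]. revert f H0 Hf. induction H as [x _ IH].
  intros f H0 Hf. apply (IH (f 1) ltac:(rewrite <- H0; apply (Hf 0)) (fun n => f (S n))); auto. Qed.

Lemma nacc_step : forall (R : term -> term -> Prop) x, ~ Acc (fun a b => R b a) x ->
  exists y, R x y /\ ~ Acc (fun a b => R b a) y.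
Proof. intros R x H. apply NNPP. intro H1. apply H. constructor. intros y Hy.
  apply NNPP. intro H2. apply H1. exists y. auto. Qed.

Lemma SN_Acc : forall (R : term -> term -> Prop) t, SN R t -> Acc (fun a b => R b a) t.
Proof. intros R t H. apply NNPP. intro Hn. apply H.
  pose (P := fun x => ~ Acc (fun a b => R b a) x).
  pose (next := fun (s : {x | P x}) =>
    let (x, Hx) := s in
    let e := constructive_indefinite_description _ (nacc_step R x Hx) in
    exist P (proj1_sig e) (proj2 (proj2_sig e))).
  exists (fun n => proj1_sig (Nat.iter n next (exist P t Hn))). split; auto.
  intros n. simpl. destruct (Nat.iter n next (exist P t Hn)) as [x Hx]. simpl.
  destruct (constructive_indefinite_description _ (nacc_step R x Hx)) as [y [Hy1 Hy2]].
  simpl. auto.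
Qed.

Fixpoint size (t : term) : nat :=
  match t with
  | Var _ => 1
  | Lam t => S (size t)
  | App t u => S (size t + size u)
  | Sub t u => S (size t + size u)
  end.

Inductive sub1 : term -> term -> Prop :=
| s_lam a : sub1 a (Lam a)
| s_appl a b : sub1 a (App a b)
| s_appr a b : sub1 b (App a b).

Inductive subeq : term -> term -> Prop :=
| se_refl a : subeq a a
| se_step a b c : sub1 a b -> subeq b c -> subeq a c.

Lemma subeq_trans : forall a b c, subeq a b -> subeq b c -> subeq a c.
Proof. induction 1; intros; auto. econstructor; eauto. Qed.

Lemma subeq_one : forall a b, sub1 a b -> subeq a b.
Proof. intros. econstructor; eauto. constructor. Qed.

Lemma beta_commute : forall a t, subeq a t -> forall a', beta_step a a' ->
  exists t', beta_step t t' /\ subeq a' t'.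
Proof. induction 1; intros a' Ha.
  - exists a'. split; auto. constructor.
  - inversion H; subst.
    + destruct (IHsubeq (Lam a')) as [t' [H1 H2]]. apply beta_lam; auto.
      exists t'. split; auto. econstructor; eauto. constructor.
    + destruct (IHsubeq (App a' b0)) as [t' [H1 H2]]. apply beta_appl; auto.
      exists t'. split; auto. econstructor; eauto. constructor.
    + destruct (IHsubeq (App a0 a')) as [t' [H1 H2]]. apply beta_appr; auto.
      exists t'. split; auto. econstructor; eauto. constructor.
Qed.

Lemma spine : forall a, exists h vs, a = apps h vs /\ forall x y, h <> App x y.
Proof. induction a.
  - exists (Var n), []. split; auto. discriminate.
  - exists (Lam a), []. split; auto. discriminate.
  - destruct IHa1 as [h [vs [-> Hh]]]. exists h, (vs ++ [a2]). split; auto.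
    rewrite apps_app. reflexivity.
  - exists (Sub a1 a2), []. split; auto. discriminate.
Qed.

Lemma apps_props : forall vs h,
  size h <= size (apps h vs) /\ subeq h (apps h vs) /\
  (forall v, In v vs -> size v < size (apps h vs) /\ subeq v (apps h vs)) /\
  (is_lambda (apps h vs) -> is_lambda h /\ forall v, In v vs -> is_lambda v).
Proof. induction vs as [|w vs IH]; intros h.
  - rewrite apps_nil. repeat split; auto; try constructor; intros; contradiction.
  - rewrite apps_cons. destruct (IH (App h w)) as [H1 [H2 [H3 H4]]]. simpl in H1.
    split; [lia|]. split.
    + eapply subeq_trans; eauto. apply subeq_one; constructor.
    + split.
      * intros v [<-|Hv].
        -- split; [lia|]. eapply subeq_trans; eauto. apply subeq_one; constructor.
        -- apply H3; auto.
      * intros Hl. destruct (H4 Hl) as [[Hl1 Hl2] Hl3]. split; auto.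
        intros v [<-|Hv]; auto.
Qed.

Lemma is_lambda_apps : forall vs h, is_lambda h -> (forall v, In v vs -> is_lambda v) ->
  is_lambda (apps h vs).
Proof. induction vs; intros; auto. rewrite apps_cons. apply IHvs.
  simpl; split; auto. apply H0; simpl; auto. intros; apply H0; simpl; auto. Qed.

Lemma is_lambda_shift : forall t d c, is_lambda t -> is_lambda (shift d c t).
Proof. induction t; intros; simpl in *; auto.
  - destruct (n <? c); simpl; auto.
  - destruct H; split; auto. Qed.

Lemma is_lambda_subst : forall t c u, is_lambda t -> is_lambda u -> is_lambda (subst c t u).
Proof. induction t; intros; cbn -[Nat.eqb Nat.ltb] in *; auto.
  - destruct (n <? c); simpl; auto. destruct (n =? c); simpl; auto. apply is_lambda_shift; auto.
  - destruct H; split; auto. Qed.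

Lemma beta_apps_head : forall vs h h', beta_step h h' -> beta_step (apps h vs) (apps h' vs).
Proof. induction vs; intros; auto. rewrite !apps_cons. apply IHvs. apply beta_appl; auto. Qed.

Lemma SNj_var : forall n, SNj (Var n).
Proof. intros. constructor. intros y Hy. inversion Hy. Qed.

Lemma main_gen : forall t, Acc (fun a b => beta_step b a) t ->
  forall n a, size a < n -> subeq a t -> is_lambda a -> SNj a.
Proof.
  intros t Ht. induction Ht as [t _ IHt].
  intros n. induction n as [|n IHn]; intros a Hsz Hsub Hl; [lia|].
  destruct (spine a) as [h [vs [-> Hh]]].
  destruct (apps_props vs h) as [P1 [P2 [P3 P4]]].
  destruct (P4 Hl) as [Hlh Hlv].
  assert (Hv : forall v, In v vs -> SNj v).
  { intros v Hin. destruct (P3 v Hin) as [Hs1 Hs2]. apply IHn; auto. lia.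
    eapply subeq_trans; eauto. }
  destruct h as [x|s|x y|x y].
  - apply SNj_apps_hv; auto. constructor. apply SNj_var. apply Forall_forall; auto.
  - destruct vs as [|v vs'].
    + rewrite apps_nil in *. apply SNj_lam. apply IHn; simpl in *; auto. lia.
      eapply subeq_trans; eauto. apply subeq_one; constructor.
    + rewrite apps_cons in *. eapply redex_main; eauto.
      * apply SNj_SNp.
        assert (Hb : beta_step (apps (App (Lam s) v) vs') (apps (subst 0 s v) vs')).
        { apply beta_apps_head. constructor. }
        destruct (beta_commute _ _ Hsub _ Hb) as [t' [Ht' Hs']].
        apply (IHt t' Ht' (S (size (apps (subst 0 s v) vs')))); auto.
        apply is_lambda_apps.
        -- apply is_lambda_subst; auto. apply Hlv; simpl; auto.
        -- intros; apply Hlv; simpl; auto.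
      * apply Hv. simpl; auto.
  - exfalso. eapply Hh; eauto.
  - simpl in Hlh. contradiction.
Qed.

Theorem corollary20 (t : term) :
  is_lambda t -> SN beta_step t -> SN lj_step t.
Proof.
  intros Hl Hsn. apply Acc_SN. apply (main_gen t (SN_Acc _ _ Hsn) (S (size t)) t); auto.
  constructor.
Qed.
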